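(* Let $(X,\tau)$ be a topological space, $\delta$ a quasi-proximity on $X$ compatible with $\tau$ such that $\mathcal{V}_\delta$ is transitive, and $\mathcal{B}=\mathcal{B}(\mathcal{V}_\delta)$. Let $\{U_i:i\in I\}$ be a nonempty family of transitive relations on $X$ containing the diagonal, closed under finite intersections, and let $\mathcal{V}$ be the filter on $X\times X$ generated by $\mathcal{V}_\delta\cup\{U_i:i\in I\}$. Then $\mathcal{V}\in\pi(\delta)$ if and only if $U_i(A)\in\mathcal{B}$ for every $i\in I$ and every $A\subseteq X$.
   Context: Quasi-uniformities and quasi-proximities are in the sense of Fletcher–Lindgren; $\delta$ compatible with $\tau$ means $\tau(\delta)=\tau$. For a quasi-proximity $\delta$, $\pi(\delta)$ is the set of quasi-uniformities $\mathcal{V}$ with $\delta(\mathcal{V})=\delta$, and $\mathcal{V}_\delta$ is its coarsest element (totally bounded). A quasi-uniformity is transitive if it has a base of transitive entourages. For $U\subseteq X\times X$, $U(x)=\{y:(x,y)\in U\}$ and $U(A)=\bigcup_{a\in A}U(a)$. For $N\subseteq X$, $U_N=(N\times N)\cup((X\setminus N)\times X)$, and $\mathcal{B}(\mathcal{W})=\{N\in\tau:U_N\in\mathcal{W}\}$; for $\mathcal{W}=\mathcal{V}_\delta$ transitive this is an l-base (a base of $\tau$ closed under finite unions and intersections containing $\emptyset,X$). *)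

(* Defs.v *)
From Stdlib Require Import List Classical FunctionalExtensionality PropExtensionality.
Import ListNotations.
Set Implicit Arguments.

Section QP.
Variable X : Type.

Definition set := X -> Prop.
Definition rel := X -> X -> Prop.

Definition setU (A B : set) : set := fun x => A x \/ B x.
Definition setC (A : set) : set := fun x => ~ A x.

Definition is_topology (tau : set -> Prop) : Prop :=
  tau (fun _ => True) /\ tau (fun _ => False) /\
  (forall G H, tau G -> tau H -> tau (fun x => G x /\ H x)) /\
  (forall F : set -> Prop, (forall G, F G -> tau G) ->
      tau (fun x => exists G, F G /\ G x)).

Definition is_qproximity (delta : set -> set -> Prop) : Prop :=
  (forall A B C, delta A (setU B C) <-> delta A B \/ delta A C) /\
  (forall A B C, delta (setU A B) C <-> delta A C \/ delta B C) /\
  (forall A B, delta A B -> (exists a, A a) /\ (exists b, B b)) /\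
  (forall A B, (exists x, A x /\ B x) -> delta A B) /\
  (forall A B, ~ delta A B ->
     exists C, ~ delta A C /\ ~ delta (setC C) B).

Definition tau_of (delta : set -> set -> Prop) (G : set) : Prop :=
  forall x, G x -> ~ delta (fun y => y = x) (setC G).

Definition compatible (delta : set -> set -> Prop) (tau : set -> Prop) : Prop :=
  forall G, tau G <-> tau_of delta G.

Definition transitive_rel (U : rel) : Prop :=
  forall x y z, U x y -> U y z -> U x z.

Definition contains_diag (U : rel) : Prop := forall x, U x x.

Definition is_qunif (W : rel -> Prop) : Prop :=
  W (fun _ _ => True) /\
  (forall U V, W U -> (forall x y, U x y -> V x y) -> W V) /\
  (forall U V, W U -> W V -> W (fun x y => U x y /\ V x y)) /\
  (forall U, W U -> contains_diag U) /\
  (forall U, W U -> exists V, W V /\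
       forall x y z, V x y -> V y z -> U x z).

Definition transitive_qunif (W : rel -> Prop) : Prop :=
  forall U, W U -> exists T, W T /\ transitive_rel T /\
     forall x y, T x y -> U x y.

Definition img (U : rel) (A : set) : set :=
  fun y => exists a, A a /\ U a y.

Definition delta_of (W : rel -> Prop) (A B : set) : Prop :=
  forall U, W U -> exists b, B b /\ img U A b.

Definition in_pi (delta : set -> set -> Prop) (W : rel -> Prop) : Prop :=
  is_qunif W /\ forall A B, delta_of W A B <-> delta A B.

Definition gen_filter (S : rel -> Prop) (R : rel) : Prop :=
  exists l : list rel, Forall S l /\
    forall x y, (forall U, In U l -> U x y) -> R x y.

Definition V_delta_subbase (delta : set -> set -> Prop) (U : rel) : Prop :=
  exists A B, ~ delta A B /\ forall x y, U x y <-> (~ A x \/ ~ B y).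

(* V_delta: the coarsest (totally bounded) member of pi(delta). *)
Definition V_delta (delta : set -> set -> Prop) : rel -> Prop :=
  gen_filter (V_delta_subbase delta).

Definition U_N (N : set) : rel := fun x y => (N x /\ N y) \/ ~ N x.

Definition Bcal (tau : set -> Prop) (W : rel -> Prop) (N : set) : Prop :=
  tau N /\ W (U_N N).

End QP.

(* Main.v *)
Require Import Defs.
From Stdlib Require Import List Classical FunctionalExtensionality PropExtensionality.
Import ListNotations.

Lemma set_ext {X} (A B : set X) : (forall x, A x <-> B x) -> A = B.
Proof. intros H; extensionality x; apply propositional_extensionality; auto. Qed.

Lemma mono_r {X} {d : set X -> set X -> Prop} : is_qproximity d ->
  forall A B B', d A B -> (forall x, B x -> B' x) -> d A B'.
Proof.
  intros [H1 _] A B B' HAB Hs.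
  assert (E : B' = setU B B').
  { apply set_ext; intro x; unfold setU; split; [auto| intros [h|h]; auto]. }
  rewrite E. apply H1. auto.
Qed.

Lemma mono_l {X} {d : set X -> set X -> Prop} : is_qproximity d ->
  forall A A' B, d A B -> (forall x, A x -> A' x) -> d A' B.
Proof.
  intros [_ [H2 _]] A A' B HAB Hs.
  assert (E : A' = setU A A').
  { apply set_ext; intro x; unfold setU; split; [auto| intros [h|h]; auto]. }
  rewrite E. apply H2. auto.
Qed.

Lemma split_r {X} {d : set X -> set X -> Prop} : is_qproximity d ->
  forall A B (C : set X), d A B ->
  d A (fun x => B x /\ C x) \/ d A (fun x => B x /\ ~ C x).
Proof.
  intros [H1 _] A B C H. apply H1.
  assert (E : B = setU (fun x => B x /\ C x) (fun x => B x /\ ~C x)).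
  { apply set_ext; intro x; unfold setU; split;
    [intro h; destruct (classic (C x)); auto | intros [[h _]|[h _]]; auto]. }
  rewrite <- E. exact H.
Qed.

Lemma split_l {X} {d : set X -> set X -> Prop} : is_qproximity d ->
  forall A B (C : set X), d A B ->
  d (fun x => A x /\ C x) B \/ d (fun x => A x /\ ~ C x) B.
Proof.
  intros [_ [H2 _]] A B C H. apply H2.
  assert (E : A = setU (fun x => A x /\ C x) (fun x => A x /\ ~C x)).
  { apply set_ext; intro x; unfold setU; split;
    [intro h; destruct (classic (C x)); auto | intros [[h _]|[h _]]; auto]. }
  rewrite <- E. exact H.
Qed.

Lemma lift {X} (d : set X -> set X -> Prop) (Hq : is_qproximity d) (P : rel X)
  (HP : forall A B, d A B -> exists a b, A a /\ B b /\ P a b) :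
  forall l, Forall (V_delta_subbase d) l -> forall A B, d A B ->
  exists a b, A a /\ B b /\ P a b /\ (forall U, In U l -> U a b).
Proof.
  induction l as [|U l IH]; intros Hl A B HAB.
  - destruct (HP A B HAB) as [a [b [? [? ?]]]]. exists a, b; repeat split; auto.
    intros U [].
  - inversion Hl as [|? ? HU Hl']; subst. destruct HU as [A1 [B1 [Hn HU]]].
    destruct (split_l Hq A B A1 HAB) as [H|H].
    + destruct (split_r Hq _ _ B1 H) as [H'|H'].
      * exfalso; apply Hn.
        apply (mono_l Hq (fun x => A x /\ A1 x)); [| intros x [_ h]; exact h].
        apply (mono_r Hq _ (fun x => B x /\ B1 x)); [exact H' | intros x [_ h]; exact h].
      * destruct (IH Hl' _ _ H') as [a [b [[Ha _] [[Hb Hb1] [HPab Hall]]]]].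
        exists a, b. repeat split; auto. intros V [<-|HV]; [apply HU; right; auto | apply Hall; auto].
    + destruct (IH Hl' _ _ H) as [a [b [[Ha Ha1] [Hb [HPab Hall]]]]].
      exists a, b; repeat split; auto. intros V [<-|HV]; [apply HU; left; auto | apply Hall; auto].
Qed.

Lemma delta_Vd {X} (d : set X -> set X -> Prop) (Hq : is_qproximity d) A B :
  d A B -> delta_of (V_delta d) A B.
Proof.
  intros H U [l [Hl HU]].
  destruct (lift d Hq (fun _ _ => True)) with (l := l) (A := A) (B := B)
    as [a [b [Ha [Hb [_ Hall]]]]]; auto.
  - intros A' B' H'. destruct Hq as [_ [_ [Hne _]]].
    destruct (Hne _ _ H') as [[a Ha] [b Hb]]. exists a, b; auto.
  - exists b; split; auto. exists a; split; auto.
Qed.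

Lemma Vd_delta {X} (d : set X -> set X -> Prop) A B :
  delta_of (V_delta d) A B -> d A B.
Proof.
  intros H. apply NNPP; intro Hn.
  destruct (H (fun x y => ~ A x \/ ~ B y)) as [b [Hb [a [Ha Hab]]]].
  - exists [fun x y => ~ A x \/ ~ B y]. split.
    + constructor; [|constructor]. exists A, B. split; [auto| tauto].
    + intros x y Hxy. apply Hxy. left; auto.
  - destruct Hab; auto.
Qed.

Theorem proposition2p4 (X : Type) (tau : set X -> Prop)
  (delta : set X -> set X -> Prop)
  (I : Type) (Ufam : I -> rel X) :
  is_topology tau ->
  is_qproximity delta ->
  compatible delta tau ->
  transitive_qunif (V_delta delta) ->
  inhabited I ->
  (forall i, transitive_rel (Ufam i)) ->
  (forall i, contains_diag (Ufam i)) ->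
  (forall i j, exists k, forall x y,
       Ufam k x y <-> (Ufam i x y /\ Ufam j x y)) ->
  (in_pi delta
     (gen_filter (fun R => V_delta delta R \/ exists i, R = Ufam i))
   <->
   (forall (i : I) (A : set X), Bcal tau (V_delta delta) (img (Ufam i) A))).
Proof.
  intros Htop Hq Hcomp Htr [i0] Utr Udiag Ucap.
  pose proof Hq as [Hadd_r [Hadd_l [Hne [Hmeet Hsep]]]].
  pose (G := fun R => V_delta delta R \/ exists i, R = Ufam i).
  assert (Ui_in_V : forall i, gen_filter G (Ufam i)).
  { intro i. exists [Ufam i]. split.
    - constructor; [right; exists i; auto | constructor].
    - intros x y Hxy. apply Hxy. left; auto. }
  assert (Vd_in_V : forall R, V_delta delta R -> gen_filter G R).
  { intros R HR. exists [R]. split.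
    - constructor; [left; auto | constructor].
    - intros x y Hxy. apply Hxy. left; auto. }
  split.
  - intros [HqV Hd] i A.
    pose (N := img (Ufam i) A).
    assert (HN : ~ delta N (setC N)).
    { intro H. apply Hd in H.
      destruct (H (Ufam i) (Ui_in_V i)) as [b [Hb [a [Ha Hab]]]].
      apply Hb. destruct Ha as [a0 [Ha0 Ha0a]]. exists a0. split; auto.
      exact (Utr _ _ _ _ Ha0a Hab). }
    split.
    + apply Hcomp. intros x Hx Hx'. apply HN.
      apply (mono_l Hq (fun y => y = x)); auto. intros y ->; auto.
    + exists [fun x y => ~ N x \/ ~ setC N y]. split.
      * constructor; [|constructor]. exists N, (setC N). split; [auto| tauto].
      * intros x y H. specialize (H _ (or_introl eq_refl)). cbv beta in H.
        unfold U_N. fold N. unfold setC in H.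
        destruct (classic (N x)) as [HNx|HNx]; [left; split; auto | right; auto].
        destruct H as [H|H]; [contradiction | apply NNPP; auto].
  - intros HB. split.
    + split; [|split; [|split; [|split]]].
      * exists nil; split; [apply Forall_nil | intros; exact Logic.I].
      * intros U V [l [Hl H]] Hs; exists l; split; auto.
      * intros U V [l1 [H1 HU]] [l2 [H2 HV]]; exists (l1 ++ l2); split;
          [apply Forall_app; auto | intros x y H; split; [apply HU|apply HV];
            intros W HW; apply H; apply in_or_app; auto].
      * intros U [l [Hl HU]] x. apply HU. intros W HW. rewrite Forall_forall in Hl.
        destruct (Hl W HW) as [[L [HL HW']] | [i ->]]; [| apply Udiag].
        apply HW'; intros Z HZ; rewrite Forall_forall in HL.
        destruct (HL Z HZ) as [A1 [B1 [Hn HZ']]]; apply HZ'.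
        destruct (classic (A1 x)); [right; intro; apply Hn; apply Hmeet; exists x; auto
                                   | left; auto].
      * intros U [l [Hl HU]].
        assert (Htl : forall l, Forall G l -> exists l', Forall G l' /\
                  Forall (@transitive_rel X) l' /\
                  forall x y, (forall T, In T l' -> T x y) -> forall W, In W l -> W x y).
        { clear l Hl HU. intros l Hl. induction Hl as [|W l HW Hl IH].
          - exists []; repeat split; try constructor. intros ? ? ? ? [].
          - destruct IH as [l' [H1 [H2 H3]]]. destruct HW as [HW | [i ->]].
            + destruct (Htr W HW) as [T [HT [HTt HTW]]]. exists (T :: l').
              repeat split; try constructor; auto.
              * left; auto.
              * intros x y H W' [<-|HW']. apply HTW, H; left; auto.
                apply (H3 x y); auto; intros T' HT'; apply H; right; auto.
            + exists (Ufam i :: l'). repeat split; try constructor; auto.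
              * right; exists i; auto.
              * intros x y H W' [<-|HW']. apply H; left; auto.
                apply (H3 x y); auto; intros T' HT'; apply H; right; auto. }
        destruct (Htl l Hl) as [l' [H1 [H2 H3]]].
        exists (fun x y => forall T, In T l' -> T x y). split.
        -- exists l'; split; auto.
        -- intros x y z Hxy Hyz. apply HU. apply H3. intros T HT.
           rewrite Forall_forall in H2. apply (H2 T HT x y z); [apply Hxy | apply Hyz]; auto.
    + intros A B; split.
      * intro H; apply Vd_delta; intros U HU; apply H; apply Vd_in_V; auto.
      * intros H R [l [Hl HR]].
        assert (Hdec : forall l, Forall G l -> exists L k,
                  Forall (V_delta_subbase delta) L /\
                  forall x y, (forall U, In U L -> U x y) -> Ufam k x y ->
                  forall U, In U l -> U x y).
        { clear l Hl HR. intros l Hl. induction Hl as [|W l HW Hl IH].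
          - exists [], i0. split; [constructor|]. intros ? ? ? ? ? [].
          - destruct IH as [L [k [HL HLk]]]. destruct HW as [[L0 [HL0 HW]] | [i ->]].
            + exists (L0 ++ L), k. split; [apply Forall_app; auto|].
              intros x y Hall Hk U [<-|HU].
              * apply HW. intros Z HZ; apply Hall; apply in_or_app; auto.
              * apply (HLk x y); auto. intros Z HZ; apply Hall; apply in_or_app; auto.
            + destruct (Ucap i k) as [k' Hk']. exists L, k'. split; auto.
              intros x y Hall Hk U [<-|HU].
              * apply Hk'; auto.
              * apply (HLk x y); auto. apply Hk'; auto. }
        destruct (Hdec l Hl) as [L [k [HL HLk]]].
        destruct (lift delta Hq (Ufam k)) with (l := L) (A := A) (B := B)
          as [a [b [Ha [Hb [Hk Hall]]]]]; auto.
        -- intros A' B' H'. pose (N := img (Ufam k) A').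
           destruct (HB k A') as [_ HUN].
           destruct (split_r Hq A' B' N H') as [H1|H1].
           ++ destruct (Hne _ _ H1) as [_ [b [Hb [a [Ha Hab]]]]].
              exists a, b; auto.
           ++ exfalso. destruct (delta_Vd delta Hq _ _ H1 _ HUN) as [b [[Hb HNb] [a [Ha Hab]]]].
              assert (HNa : N a) by (exists a; split; [auto | apply Udiag]).
              destruct Hab as [[_ h]|h]; auto.
        -- exists b; split; auto. exists a; split; auto.
           apply HR. apply (HLk a b); auto.
Qed.
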